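(* Let $X, Y \subseteq \omega$. There exists an embedding $\mathcal{K}_1^X \hookrightarrow \mathcal{K}_2^Y$ if and only if $X \le_T Y$.
   Context: A pca is a set with a partial binary application operation containing distinct $\mathrm{s},\mathrm{k}$ with $\mathrm{k}ab\downarrow=a$, $\mathrm{s}ab\downarrow$, $\mathrm{s}abc\simeq(ac)(bc)$. An embedding of pcas is an injective map $f$ with: if $ab$ is defined then $f(a)f(b)$ is defined and equals $f(ab)$. $\mathcal{K}_1^X$ is the pca on $\omega$ with $n\cdot m=\Phi^X_n(m)$, the $n$-th partial $X$-computable function applied to $m$. $\mathcal{K}_2^Y$ (in the coding used here): elements are the total $Y$-computable functions $g:\omega\to\omega$, with $g\cdot h$ the function $n\mapsto\Phi^{g\oplus h}_{g(0)}(n)$ ($\Phi_e$ the $e$-th Turing functional, $(g\oplus h)(2n)=g(n)$, $(g\oplus h)(2n+1)=h(n)$), defined if and only if this function is total. *)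

(* Defs.v *)
From HB Require Import structures.
From mathcomp Require Import all_boot.
From Stdlib Require Cantor.

Set Implicit Arguments.
Unset Strict Implicit.
Unset Printing Implicit Defensive.

Definition cpair (x y : nat) : nat := Cantor.to_nat (x, y).
Definition unpair (z : nat) : nat * nat := Cantor.of_nat z.

Inductive prog : Type :=
| PZero
| PSucc
| PId
| POracle
| PFst
| PSnd
| PPair of prog & prog
| PComp of prog & prog
| PRec of prog & prog
| PMu of prog.

Inductive ev (o : nat -> nat) : prog -> nat -> nat -> Prop :=
| evZero x : ev o PZero x 0
| evSucc x : ev o PSucc x x.+1
| evId x : ev o PId x x
| evOracle x : ev o POracle x (o x)
| evFst x : ev o PFst x (unpair x).1
| evSnd x : ev o PSnd x (unpair x).2
| evPair f g x a b : ev o f x a -> ev o g x b -> ev o (PPair f g) x (cpair a b)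
| evComp f g x a b : ev o g x a -> ev o f a b -> ev o (PComp f g) x b
| evRec0 f g x v : ev o f x v -> ev o (PRec f g) (cpair x 0) v
| evRecS f g x n r v :
    ev o (PRec f g) (cpair x n) r -> ev o g (cpair x (cpair n r)) v ->
    ev o (PRec f g) (cpair x n.+1) v
| evMu f x n :
    ev o f (cpair x n) 0 ->
    (forall m, m < n -> exists w, ev o f (cpair x m) w.+1) ->
    ev o (PMu f) x n.

(* Coding of programs, giving an effective enumeration of all programs. *)
Fixpoint prog_enc (p : prog) : GenTree.tree nat :=
  match p with
  | PZero => GenTree.Node 0 [::]
  | PSucc => GenTree.Node 1 [::]
  | PId => GenTree.Node 2 [::]
  | POracle => GenTree.Node 3 [::]
  | PFst => GenTree.Node 4 [::]
  | PSnd => GenTree.Node 5 [::]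
  | PPair f g => GenTree.Node 6 [:: prog_enc f; prog_enc g]
  | PComp f g => GenTree.Node 7 [:: prog_enc f; prog_enc g]
  | PRec f g => GenTree.Node 8 [:: prog_enc f; prog_enc g]
  | PMu f => GenTree.Node 9 [:: prog_enc f]
  end.

Fixpoint prog_dec (t : GenTree.tree nat) : option prog :=
  match t with
  | GenTree.Node 0 [::] => Some PZero
  | GenTree.Node 1 [::] => Some PSucc
  | GenTree.Node 2 [::] => Some PId
  | GenTree.Node 3 [::] => Some POracle
  | GenTree.Node 4 [::] => Some PFst
  | GenTree.Node 5 [::] => Some PSnd
  | GenTree.Node 6 [:: t1; t2] =>
      if (prog_dec t1, prog_dec t2) is (Some f, Some g) then Some (PPair f g) else None
  | GenTree.Node 7 [:: t1; t2] =>
      if (prog_dec t1, prog_dec t2) is (Some f, Some g) then Some (PComp f g) else None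
  | GenTree.Node 8 [:: t1; t2] =>
      if (prog_dec t1, prog_dec t2) is (Some f, Some g) then Some (PRec f g) else None
  | GenTree.Node 9 [:: t1] =>
      if prog_dec t1 is Some f then Some (PMu f) else None
  | _ => None
  end.

Lemma prog_encK : pcancel prog_enc prog_dec.
Proof. by elim=> //= [f -> g ->|f -> g ->|f -> g ->|f ->]. Qed.

HB.instance Definition _ := Countable.copy prog (pcan_type prog_encK).

(* A program that never halts (used for codes that decode to no program). *)
Definition loop_prog : prog := PMu (PComp PSucc PZero).

Definition prog_of (e : nat) : prog :=
  if unpickle e is Some p then p else loop_prog.

Definition Phi (o : nat -> nat) (e m v : nat) : Prop := ev o (prog_of e) m v.

(* Sets X ⊆ ω are boolean predicates; as oracles, their characteristic functions. *)
Definition chi (X : nat -> bool) : nat -> nat := fun n => if X n then 1 else 0.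

Definition turing_le (X Y : nat -> bool) : Prop :=
  exists e, forall n, Phi (chi Y) e n (chi X n).

Definition join (g h : nat -> nat) : nat -> nat :=
  fun m => if odd m then h m./2 else g m./2.

(* K_1^X : application  a . b ≃ Phi^X_a(b);  K1app X a b c  means a.b↓ = c. *)
Definition K1app (X : nat -> bool) (a b c : nat) : Prop := Phi (chi X) a b c.

Definition K2elem (Y : nat -> bool) (g : nat -> nat) : Prop :=
  exists e, forall n, Phi (chi Y) e n (g n).

(* K_2 application:  K2app g h k  means g.h is defined and equals k,
   i.e. for every n, Phi^{g ⊕ h}_{g(0)}(n) converges with value k n. *)
Definition K2app (g h k : nat -> nat) : Prop :=
  forall n, Phi (join g h) (g 0) n (k n).

(* An embedding K_1^X -> K_2^Y: an injective map into the elements of K_2^Y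
   (functions compared extensionally) preserving defined applications. *)
Definition K1_K2_embedding (X Y : nat -> bool) (f : nat -> nat -> nat) : Prop :=
  [/\ forall a, K2elem Y (f a),
      forall a b, (forall n, f a n = f b n) -> a = b &
      forall a b c, K1app X a b c -> K2app (f a) (f b) (f c)].

(* Main.v *)
From HB Require Import structures.
From mathcomp Require Import all_boot.
From Stdlib Require Cantor.
From Stdlib Require Import Lia Classical.
From mathcomp Require Import zify.
Require Import Defs.
Set Implicit Arguments.
Unset Strict Implicit.
Unset Printing Implicit Defensive.


Lemma unpairK a b : unpair (cpair a b) = (a, b).
Proof. exact: Cantor.cancel_of_to. Qed.
Lemma cpairK z : cpair (unpair z).1 (unpair z).2 = z.
Proof. rewrite /cpair /unpair; by case: (Cantor.of_nat z) (Cantor.cancel_to_of z). Qed.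
Lemma cpair00 : cpair 0 0 = 0. Proof. by []. Qed.
Lemma unpair0 : unpair 0 = (0, 0). Proof. by rewrite -cpair00 unpairK. Qed.
Lemma cpair_inj a b c d : cpair a b = cpair c d -> a = c /\ b = d.
Proof. by move=> E; have := unpairK a b; rewrite E unpairK => -[-> ->]. Qed.
Lemma cpair_ge2 a b : b <= cpair a b.
Proof. by have := Cantor.to_nat_non_decreasing a b; rewrite /cpair; lia. Qed.
Lemma cpair_ge1 a b : a <= cpair a b.
Proof. by have := Cantor.to_nat_non_decreasing a b; rewrite /cpair; lia. Qed.
Arguments cpair : simpl never.
Arguments unpair : simpl never.

Inductive expr : Type :=
| Var of nat
| Cst of nat
| Succ of expr
| Pred of expr
| Pair of expr & expr
| Fst of expr
| Snd of expr
| Orc of expr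
| Let of expr & expr
| IfZ of expr & expr & expr
| Rec of expr & expr & expr
| Ext of prog & (nat -> nat) & expr.

Fixpoint den (o : nat -> nat) (e : expr) (env : seq nat) {struct e} : nat :=
  match e with
  | Var i => nth 0 env i
  | Cst n => n
  | Succ e => (den o e env).+1
  | Pred e => (den o e env).-1
  | Pair e1 e2 => cpair (den o e1 env) (den o e2 env)
  | Fst e => (unpair (den o e env)).1
  | Snd e => (unpair (den o e env)).2
  | Orc e => o (den o e env)
  | Let e1 e2 => den o e2 (den o e1 env :: env)
  | IfZ c a b => if den o c env is 0 then den o a env else den o b env
  | Rec ne b s =>
      let fix loop n := match n with
                        | 0 => den o b env
                        | n'.+1 => den o s (loop n' :: n' :: env) end
      in loop (den o ne env)
  | Ext p F e => F (den o e env)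
  end.

Fixpoint ok (o : nat -> nat) (e : expr) : Prop :=
  match e with
  | Var _ | Cst _ => True
  | Succ e | Pred e | Fst e | Snd e | Orc e => ok o e
  | Pair e1 e2 | Let e1 e2 => ok o e1 /\ ok o e2
  | IfZ a b c | Rec a b c => [/\ ok o a, ok o b & ok o c]
  | Ext p F e => (forall x, ev o p x (F x)) /\ ok o e
  end.

Definition enc_env (l : seq nat) : nat := foldr cpair 0 l.

Fixpoint snds (i : nat) : prog := if i is i'.+1 then PComp (snds i') PSnd else PId.
Fixpoint const_prog (n : nat) : prog :=
  if n is n'.+1 then PComp PSucc (const_prog n') else PZero.
Definition pred_prog := PComp (PRec PZero (PComp PFst PSnd)) (PPair PId PId).
Definition rearr := PPair (PComp PSnd PSnd) (PPair (PComp PFst PSnd) PFst).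

Fixpoint comp (e : expr) : prog :=
  match e with
  | Var i => PComp PFst (snds i)
  | Cst n => const_prog n
  | Succ e => PComp PSucc (comp e)
  | Pred e => PComp pred_prog (comp e)
  | Pair e1 e2 => PPair (comp e1) (comp e2)
  | Fst e => PComp PFst (comp e)
  | Snd e => PComp PSnd (comp e)
  | Orc e => PComp POracle (comp e)
  | Let e1 e2 => PComp (comp e2) (PPair (comp e1) PId)
  | IfZ c a b => PComp (PRec (comp a) (PComp (comp b) PFst)) (PPair PId (comp c))
  | Rec ne b s => PComp (PRec (comp b) (PComp (comp s) rearr)) (PPair PId (comp ne))
  | Ext p F e => PComp p (comp e)
  end.

Section Ev.
Variable o : nat -> nat.

Lemma ev_fst0 : ev o PFst 0 0. Proof. by have := evFst o 0; rewrite unpair0. Qed.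
Lemma ev_snd0 : ev o PSnd 0 0. Proof. by have := evSnd o 0; rewrite unpair0. Qed.
Lemma ev_fstP a b : ev o PFst (cpair a b) a. Proof. by have := evFst o (cpair a b); rewrite unpairK. Qed.
Lemma ev_sndP a b : ev o PSnd (cpair a b) b. Proof. by have := evSnd o (cpair a b); rewrite unpairK. Qed.

Lemma ev_snds i l : ev o (snds i) (enc_env l) (enc_env (drop i l)).
Proof.
elim: i l => [|i IH] l /=; first by rewrite drop0; constructor.
have H1 : ev o PSnd (enc_env l) (enc_env (behead l)).
  case: l => [|a s] /=; [exact: ev_snd0 | exact: ev_sndP].
apply: evComp H1 _; have := IH (behead l).
by case: l => [|a s] //=; rewrite drop_nil.
Qed.

Lemma ev_const n x : ev o (const_prog n) x n.
Proof. elim: n => [|n IH] /=; [constructor | exact: evComp IH (evSucc _ _)]. Qed.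

Lemma ev_input y P : (forall x n, y = cpair x n -> P x n) -> P (unpair y).1 (unpair y).2.
Proof. by move=> H; apply: H; rewrite cpairK. Qed.

Lemma ev_prec f g x (F : nat -> nat) :
  ev o f x (F 0) -> (forall n, ev o g (cpair x (cpair n (F n))) (F n.+1)) ->
  forall n, ev o (PRec f g) (cpair x n) (F n).
Proof.
move=> H0 HS; elim=> [|n IH]; first exact: evRec0.
exact: evRecS IH (HS n).
Qed.

Lemma ev_pred x : ev o pred_prog x x.-1.
Proof.
apply: evComp (evPair (evId _ _) (evId _ _)) _.
apply: (@ev_prec PZero _ x (fun n => n.-1)); first exact: evZero.
move=> n; apply: evComp (evSnd _ _) _; rewrite unpairK /=.
by have := evFst o (cpair n n.-1); rewrite unpairK.
Qed.

Lemma comp_correct e : ok o e -> forall env, ev o (comp e) (enc_env env) (den o e env).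
Proof.
elim: e => /=.
- move=> i _ env; apply: evComp (ev_snds i env) _.
  have -> : nth 0 env i = nth 0 (drop i env) 0 by rewrite nth_drop addn0.
  case: (drop i env) => [|a s] /=; first exact: ev_fst0.
  exact: ev_fstP.
- by move=> n _ env; exact: ev_const.
- by move=> e IH H env; apply: evComp (IH H env) (evSucc _ _).
- by move=> e IH H env; apply: evComp (IH H env) (ev_pred _).
- by move=> e1 IH1 e2 IH2 [H1 H2] env; apply: evPair; [exact: IH1|exact: IH2].
- by move=> e IH H env; apply: evComp (IH H env) (evFst _ _).
- by move=> e IH H env; apply: evComp (IH H env) (evSnd _ _).
- by move=> e IH H env; apply: evComp (IH H env) (evOracle _ _).
- move=> e1 IH1 e2 IH2 [H1 H2] env; apply: evComp _ (IH2 H2 _).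
  exact: (evPair (IH1 H1 env) (evId _ _)).
- move=> c IHc a IHa b IHb [Hc Ha Hb] env.
  apply: evComp (evPair (evId _ _) (IHc Hc env)) _.
  pose F n := if n is 0 then den o a env else den o b env.
  have := (@ev_prec (comp a) (PComp (comp b) PFst) (enc_env env) F (IHa Ha env)).
  case: (den o c env) => [|n]; apply => m; apply: evComp (IHb Hb env).
  by have := evFst o (cpair (enc_env env) (cpair m (F m))); rewrite unpairK.
  by have := evFst o (cpair (enc_env env) (cpair m (F m))); rewrite unpairK.
- move=> ne IHn b IHb s IHs [Hn Hb Hs] env.
  apply: evComp (evPair (evId _ _) (IHn Hn env)) _.
  apply: ev_prec; first exact: IHb.
  move=> n; apply: evComp (IHs Hs _).
  set x := enc_env env; set r := (X in cpair n X).
  have -> : enc_env [:: r, n & env] = cpair r (cpair n x) by [].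
  apply: evPair; last apply: evPair.
  + apply: evComp (evSnd _ _) _; rewrite unpairK.
    by have := evSnd o (cpair n r); rewrite unpairK.
  + apply: evComp (evSnd _ _) _; rewrite unpairK.
    by have := evFst o (cpair n r); rewrite unpairK.
  + by have := evFst o (cpair x (cpair n r)); rewrite unpairK.
- by move=> p F e IH [Hp H] env; apply: evComp (IH H env) (Hp _).
Qed.

End Ev.


Fixpoint recf (b : nat) (s : nat -> nat -> nat) (n : nat) : nat :=
  if n is n'.+1 then s n' (recf b s n') else b.

Lemma den_Rec o ne b s env :
  den o (Rec ne b s) env = recf (den o b env) (fun n r => den o s (r :: n :: env)) (den o ne env).
Proof. by rewrite /=; elim: (den o ne env) => //= n ->. Qed.

Definition Sub a b := Rec b a (Pred (Var 0)).
Lemma den_Sub o a b env : den o (Sub a b) env = den o a env - den o b env.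
Proof. rewrite /Sub den_Rec; elim: (den o b env) => /= [|n ->]; by [rewrite subn0|rewrite subnS]. Qed.

Definition IfEq a b x y := IfZ (Sub a b) (IfZ (Sub b a) x y) y.
Lemma den_IfZ o c a b env : den o (IfZ c a b) env = if den o c env is 0 then den o a env else den o b env.
Proof. by []. Qed.
Lemma den_IfEq o a b x y env :
  den o (IfEq a b x y) env = if den o a env == den o b env then den o x env else den o y env.
Proof.
rewrite /IfEq !den_IfZ !den_Sub.
case: (ltngtP (den o a env) (den o b env)) => H.
- have -> : den o a env - den o b env = 0 by lia.
  by case E: (_ - _) => [|k]; [lia|].
- by case E: (_ - _) => [|k]; [lia|].
- by rewrite H subnn.
Qed.

Lemma den_Fst o e env : den o (Fst e) env = (unpair (den o e env)).1. Proof. by []. Qed.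
Lemma den_Snd o e env : den o (Snd e) env = (unpair (den o e env)).2. Proof. by []. Qed.
Lemma den_Pair o a b env : den o (Pair a b) env = cpair (den o a env) (den o b env). Proof. by []. Qed.
Lemma den_Succ o e env : den o (Succ e) env = (den o e env).+1. Proof. by []. Qed.
Lemma den_Pred o e env : den o (Pred e) env = (den o e env).-1. Proof. by []. Qed.
Lemma den_Orc o e env : den o (Orc e) env = o (den o e env). Proof. by []. Qed.
Lemma den_Cst o n env : den o (Cst n) env = n. Proof. by []. Qed.
Lemma den_Var o i env : den o (Var i) env = nth 0 env i. Proof. by []. Qed.
Lemma den_Let o a b env : den o (Let a b) env = den o b (den o a env :: env). Proof. by []. Qed.

Definition Dbl a := Rec a (Cst 0) (Succ (Succ (Var 0))).
Lemma den_Dbl o a env : den o (Dbl a) env = (den o a env).*2.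
Proof. rewrite /Dbl den_Rec; elim: (den o a env) => //= n ->; by rewrite doubleS. Qed.

Definition HalfOdd a := Rec a (Pair (Cst 0) (Cst 0))
  (IfZ (Snd (Var 0)) (Pair (Fst (Var 0)) (Cst 1)) (Pair (Succ (Fst (Var 0))) (Cst 0))).
Lemma den_HalfOdd o a env : den o (HalfOdd a) env = cpair (den o a env)./2 (odd (den o a env)).
Proof.
rewrite /HalfOdd den_Rec; elim: (den o a env) => //= n ->; rewrite !unpairK /=.
by case E: (odd n) => /=; rewrite ?unpairK /= uphalf_half E.
Qed.
Definition Half a := Fst (HalfOdd a).
Definition Odd a := Snd (HalfOdd a).
Lemma den_Half o a env : den o (Half a) env = (den o a env)./2.
Proof. by rewrite /Half den_Fst den_HalfOdd unpairK. Qed.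
Lemma den_Odd o a env : den o (Odd a) env = odd (den o a env).
Proof. by rewrite /Odd den_Snd den_HalfOdd unpairK. Qed.

Fixpoint Case (e : expr) (bs : seq expr) (d : expr) : expr :=
  if bs is b :: bs' then IfZ e b (Case (Pred e) bs' d) else d.
Lemma den_Case o e bs d env :
  den o (Case e bs d) env = nth (den o d env) [seq den o b env | b <- bs] (den o e env).
Proof.
elim: bs e => [|b bs IH] e; first by rewrite /= nth_nil.
change (den o (IfZ e b (Case (Pred e) bs d)) env = nth (den o d env) [seq den o b0 env | b0 <- b :: bs] (den o e env)).
by rewrite den_IfZ IH den_Pred; case: (den o e env).
Qed.

Definition Cons a l := Succ (Pair a l).
Definition Hd l := Fst (Pred l).
Definition Tl l := Snd (Pred l).
Definition enc_list (l : seq nat) : nat := foldr (fun a r => (cpair a r).+1) 0 l.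
Lemma den_Cons o a l env : den o (Cons a l) env = (cpair (den o a env) (den o l env)).+1.
Proof. by []. Qed.
Lemma den_Hd o l env : den o (Hd l) env = (unpair (den o l env).-1).1. Proof. by []. Qed.
Lemma den_Tl o l env : den o (Tl l) env = (unpair (den o l env).-1).2. Proof. by []. Qed.
Lemma hd_enc (s : seq nat) : (unpair (enc_list s).-1).1 = head 0 s.
Proof. by case: s => [|a s] /=; rewrite ?unpair0 ?unpairK. Qed.
Lemma tl_enc (s : seq nat) : (unpair (enc_list s).-1).2 = enc_list (behead s).
Proof. by case: s => [|a s] /=; rewrite ?unpair0 ?unpairK. Qed.


Fixpoint myc (p : prog) : nat :=
  match p with
  | PZero => cpair 0 0 | PSucc => cpair 1 0 | PId => cpair 2 0 | POracle => cpair 3 0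
  | PFst => cpair 4 0 | PSnd => cpair 5 0
  | PPair f g => cpair 6 (cpair (myc f) (myc g))
  | PComp f g => cpair 7 (cpair (myc f) (myc g))
  | PRec f g => cpair 8 (cpair (myc f) (myc g))
  | PMu f => cpair 9 (myc f)
  end.

Definition mEval t c x := cpair 0 (cpair t (cpair c x)).
Definition mRet v := cpair 1 v.
Definition kcons fr K := (cpair fr K).+1.
Definition fPair1 t g x := cpair 0 (cpair t (cpair g x)).
Definition fPair2 a := cpair 1 a.
Definition fComp t f := cpair 2 (cpair t f).
Definition fRec t g x n N := cpair 3 (cpair t (cpair g (cpair x (cpair n N)))).
Definition fMu t f x n := cpair 4 (cpair t (cpair f (cpair x n))).

Definition EvalE T Cd X := Pair (Cst 0) (Pair T (Pair Cd X)).
Definition RetE V := Pair (Cst 1) V.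

Definition STEP (RES : expr) : expr :=
 let C := Var 0 in
 let M := Fst C in let K := Snd C in
 IfZ (Fst M)
  (let T := Fst (Snd M) in let Cd := Fst (Snd (Snd M)) in let X := Snd (Snd (Snd M)) in
   let A := Snd Cd in
   Case (Fst Cd)
    [:: Pair (RetE (Cst 0)) K;
        Pair (RetE (Succ X)) K;
        Pair (RetE X) K;
        Pair (Let T (Let (Snd (Snd (Snd (Fst (Var 1))))) RES)) K;
        Pair (RetE (Fst X)) K;
        Pair (RetE (Snd X)) K;
        Pair (EvalE T (Fst A) X) (Cons (Pair (Cst 0) (Pair T (Pair (Snd A) X))) K);
        Pair (EvalE T (Snd A) X) (Cons (Pair (Cst 2) (Pair T (Fst A))) K);
        Pair (EvalE T (Fst A) (Fst X))
             (Cons (Pair (Cst 3) (Pair T (Pair (Snd A) (Pair (Fst X) (Pair (Cst 0) (Snd X)))))) K);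
        Pair (EvalE T A (Pair X (Cst 0))) (Cons (Pair (Cst 4) (Pair T (Pair A (Pair X (Cst 0))))) K)]
    C)
  (let V := Snd M in
   IfZ K C
    (let Fr := Hd K in let K' := Tl K in let D := Snd Fr in
     Case (Fst Fr)
      [:: Pair (EvalE (Fst D) (Fst (Snd D)) (Snd (Snd D))) (Cons (Pair (Cst 1) V) K');
          Pair (RetE (Pair D V)) K';
          Pair (EvalE (Fst D) (Snd D) V) K';
          (let t := Fst D in let g := Fst (Snd D) in let x := Fst (Snd (Snd D)) in
           let n := Fst (Snd (Snd (Snd D))) in let N := Snd (Snd (Snd (Snd D))) in
           IfEq n N (Pair (RetE V) K')
                    (Pair (EvalE t g (Pair x (Pair n V)))
                          (Cons (Pair (Cst 3) (Pair t (Pair g (Pair x (Pair (Succ n) N))))) K')));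
          (let t := Fst D in let f := Fst (Snd D) in let x := Fst (Snd (Snd D)) in
           let n := Snd (Snd (Snd D)) in
           IfZ V (Pair (RetE n) K')
                 (Pair (EvalE t f (Pair x (Succ n)))
                       (Cons (Pair (Cst 4) (Pair t (Pair f (Pair x (Succ n))))) K')))]
      C)).

Section Step.
Variables (o : nat -> nat) (RES : expr).
Definition step c := den o (STEP RES) [:: c].

Ltac dsimp := do 8 (cbn [den Case nth map fst snd myc RetE EvalE Cons Hd Tl mEval mRet kcons
   fPair1 fPair2 fComp fRec fMu predn]; rewrite ?unpairK).

Lemma step_prim t x K :
  [/\ step (cpair (mEval t (myc PZero) x) K) = cpair (mRet 0) K,
      step (cpair (mEval t (myc PSucc) x) K) = cpair (mRet x.+1) K,
      step (cpair (mEval t (myc PId) x) K) = cpair (mRet x) K,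
      step (cpair (mEval t (myc PFst) x) K) = cpair (mRet (unpair x).1) K &
      step (cpair (mEval t (myc PSnd) x) K) = cpair (mRet (unpair x).2) K].
Proof. by split; rewrite /step /STEP; dsimp. Qed.
Lemma step_oracle t x K :
  step (cpair (mEval t (myc POracle) x) K) = cpair (den o RES [:: x; t; cpair (mEval t (myc POracle) x) K]) K.
Proof. by rewrite /step /STEP; dsimp. Qed.
Lemma step_pair t f g x K :
  step (cpair (mEval t (myc (PPair f g)) x) K) = cpair (mEval t (myc f) x) (kcons (fPair1 t (myc g) x) K).
Proof. by rewrite /step /STEP; dsimp. Qed.
Lemma step_pair1 t g x v K :
  step (cpair (mRet v) (kcons (fPair1 t g x) K)) = cpair (mEval t g x) (kcons (fPair2 v) K).
Proof. by rewrite /step /STEP; dsimp. Qed.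
Lemma step_pair2 a v K :
  step (cpair (mRet v) (kcons (fPair2 a) K)) = cpair (mRet (cpair a v)) K.
Proof. by rewrite /step /STEP; dsimp. Qed.
Lemma step_comp t f g x K :
  step (cpair (mEval t (myc (PComp f g)) x) K) = cpair (mEval t (myc g) x) (kcons (fComp t (myc f)) K).
Proof. by rewrite /step /STEP; dsimp. Qed.
Lemma step_comp1 t f v K :
  step (cpair (mRet v) (kcons (fComp t f) K)) = cpair (mEval t f v) K.
Proof. by rewrite /step /STEP; dsimp. Qed.
Lemma step_prec t f g x N K :
  step (cpair (mEval t (myc (PRec f g)) (cpair x N)) K) =
  cpair (mEval t (myc f) x) (kcons (fRec t (myc g) x 0 N) K).
Proof. by rewrite /step /STEP; dsimp. Qed.
Lemma step_rec t g x n N K v : step (cpair (mRet v) (kcons (fRec t g x n N) K)) =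
  if n == N then cpair (mRet v) K else
  cpair (mEval t g (cpair x (cpair n v))) (kcons (fRec t g x n.+1 N) K).
Proof. rewrite /step /STEP; dsimp; rewrite den_IfEq; dsimp; by case: eqP. Qed.
Lemma step_mu t f x K :
  step (cpair (mEval t (myc (PMu f)) x) K) = cpair (mEval t (myc f) (cpair x 0)) (kcons (fMu t (myc f) x 0) K).
Proof. by rewrite /step /STEP; dsimp. Qed.
Lemma step_mu1 t f x n v K :
  step (cpair (mRet v) (kcons (fMu t f x n) K)) =
  if v is 0 then cpair (mRet n) K else cpair (mEval t f (cpair x n.+1)) (kcons (fMu t f x n.+1) K).
Proof. rewrite /step /STEP; dsimp; by case: v => [|v]; dsimp. Qed.
Lemma step_halt v : step (cpair (mRet v) 0) = cpair (mRet v) 0.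
Proof. by rewrite /step /STEP; dsimp. Qed.
End Step.


Section EvInd.
Variable w : nat -> nat.
Variable P : prog -> nat -> nat -> Prop.
Hypotheses
  (HZ : forall x, P PZero x 0)
  (HS : forall x, P PSucc x x.+1)
  (HI : forall x, P PId x x)
  (HO : forall x, P POracle x (w x))
  (HF : forall x, P PFst x (unpair x).1)
  (HSn : forall x, P PSnd x (unpair x).2)
  (HP : forall f g x a b, ev w f x a -> P f x a -> ev w g x b -> P g x b -> P (PPair f g) x (cpair a b))
  (HC : forall f g x a b, ev w g x a -> P g x a -> ev w f a b -> P f a b -> P (PComp f g) x b)
  (HR0 : forall f g x v, ev w f x v -> P f x v -> P (PRec f g) (cpair x 0) v)
  (HRS : forall f g x n r v, ev w (PRec f g) (cpair x n) r -> P (PRec f g) (cpair x n) r ->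
          ev w g (cpair x (cpair n r)) v -> P g (cpair x (cpair n r)) v ->
          P (PRec f g) (cpair x n.+1) v)
  (HM : forall f x n, ev w f (cpair x n) 0 -> P f (cpair x n) 0 ->
          (forall m, m < n -> exists u, ev w f (cpair x m) u.+1 /\ P f (cpair x m) u.+1) ->
          P (PMu f) x n).

Fixpoint ev_ind2 p x v (H : ev w p x v) {struct H} : P p x v.
Proof.
destruct H.
- exact: HZ. - exact: HS. - exact: HI. - exact: HO. - exact: HF. - exact: HSn.
- apply: HP; [exact H | exact (ev_ind2 _ _ _ H) | exact H0 | exact (ev_ind2 _ _ _ H0)].
- apply: HC; [exact H | exact (ev_ind2 _ _ _ H) | exact H0 | exact (ev_ind2 _ _ _ H0)].
- apply: HR0; [exact H | exact (ev_ind2 _ _ _ H)].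
- apply: HRS; [exact H | exact (ev_ind2 _ _ _ H) | exact H0 | exact (ev_ind2 _ _ _ H0)].
- apply: HM; [exact H | exact (ev_ind2 _ _ _ H) |].
  move=> m hm; destruct (H0 m hm) as [u Hu]; exists u; split; [exact Hu | exact (ev_ind2 _ _ _ Hu)].
Defined.
End EvInd.

Section Sound.
Variables (o : nat -> nat) (RES : expr).
Local Notation step := (step o RES).

Definition reach c d := exists n, iter n step c = d.
Lemma reach_refl c : reach c c. Proof. by exists 0. Qed.
Lemma reach_trans c d e : reach c d -> reach d e -> reach c e.
Proof. move=> [n <-] [m <-]; exists (m + n); by rewrite iterD. Qed.
Lemma reach_step c d : reach (step c) d -> reach c d.
Proof. move=> [n <-]; exists n.+1; by rewrite iterSr. Qed.

Variables (t : nat) (w : nat -> nat).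
Hypothesis Horc : forall q K, reach (cpair (mEval t (myc POracle) q) K) (cpair (mRet (w q)) K).

Definition SP p y v :=
  (forall K, reach (cpair (mEval t (myc p) y) K) (cpair (mRet v) K)) /\
  (forall f g, p = PRec f g -> forall x n, y = cpair x n -> forall N K, n <= N ->
     reach (cpair (mEval t (myc f) x) (kcons (fRec t (myc g) x 0 N) K))
           (cpair (mRet v) (kcons (fRec t (myc g) x n N) K))).

Lemma sound_all : forall p x v, ev w p x v -> SP p x v.
Proof.
apply: ev_ind2.
- by move=> x'; split=> // K; apply: reach_step; case: (step_prim o RES t x' K) => -> *; apply: reach_refl.
- by move=> x'; split=> // K; apply: reach_step; case: (step_prim o RES t x' K) => _ -> *; apply: reach_refl.
- by move=> x'; split=> // K; apply: reach_step; case: (step_prim o RES t x' K) => _ _ -> *; apply: reach_refl.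
- by move=> x'; split=> // K; apply: Horc.
- by move=> x'; split=> // K; apply: reach_step; case: (step_prim o RES t x' K) => _ _ _ -> *; apply: reach_refl.
- by move=> x'; split=> // K; apply: reach_step; case: (step_prim o RES t x' K) => _ _ _ _ ->; apply: reach_refl.
- move=> f g x' a b _ [Hf _] _ [Hg _]; split=> // K.
  apply: reach_step; rewrite step_pair; apply: reach_trans (Hf _) _.
  apply: reach_step; rewrite step_pair1; apply: reach_trans (Hg _) _.
  apply: reach_step; rewrite step_pair2; exact: reach_refl.
- move=> f g x' a b _ [Hg _] _ [Hf _]; split=> // K.
  apply: reach_step; rewrite step_comp; apply: reach_trans (Hg _) _.
  apply: reach_step; rewrite step_comp1; exact: Hf.
- move=> f g x' v' _ [Hf _].
  have H2 : forall f0 g0, PRec f g = PRec f0 g0 -> forall x n, cpair x' 0 = cpair x n -> forall N K, n <= N ->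
     reach (cpair (mEval t (myc f0) x) (kcons (fRec t (myc g0) x 0 N) K))
           (cpair (mRet v') (kcons (fRec t (myc g0) x n N) K)).
    move=> f0 g0 [<- <-] x n /cpair_inj [<- <-] N K _; exact: Hf.
  split=> // K; apply: reach_step; rewrite step_prec; apply: reach_trans (H2 _ _ erefl _ _ erefl 0 K (leqnn 0)) _.
  apply: reach_step; rewrite step_rec eqxx; exact: reach_refl.
- move=> f g x' n r v' _ [_ HR] _ [Hg _].
  have H2 : forall f0 g0, PRec f g = PRec f0 g0 -> forall x m, cpair x' n.+1 = cpair x m -> forall N K, m <= N ->
     reach (cpair (mEval t (myc f0) x) (kcons (fRec t (myc g0) x 0 N) K))
           (cpair (mRet v') (kcons (fRec t (myc g0) x m N) K)).
    move=> f0 g0 [<- <-] x m /cpair_inj [<- <-] N K hN.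
    apply: reach_trans (HR f g erefl x' n erefl N K (ltnW hN)) _.
    apply: reach_step; rewrite step_rec; have /negPf -> : n != N by lia.
    exact: Hg.
  split=> // K; apply: reach_step; rewrite step_prec; apply: reach_trans (H2 _ _ erefl _ _ erefl _ K (leqnn _)) _.
  apply: reach_step; rewrite step_rec eqxx; exact: reach_refl.
- move=> f x' n _ [H0 _] Hlt; split=> // K.
  have key : forall k, k <= n -> reach (cpair (mEval t (myc f) (cpair x' (n - k))) (kcons (fMu t (myc f) x' (n - k)) K))
                                     (cpair (mRet n) K).
    elim=> [|k IH] hk.
      rewrite subn0; apply: reach_trans (H0 _) _; apply: reach_step; rewrite step_mu1; exact: reach_refl.
    have [u [_ [Hu _]]] := Hlt (n - k.+1) ltac:(lia).
    apply: reach_trans (Hu _) _; apply: reach_step; rewrite step_mu1.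
    have -> : (n - k.+1).+1 = n - k by lia.
    exact: IH (ltnW hk).
  apply: reach_step; rewrite step_mu; have := key n (leqnn n); by rewrite subnn.
Qed.

Lemma sound p x v : ev w p x v -> forall K, reach (cpair (mEval t (myc p) x) K) (cpair (mRet v) K).
Proof. by move=> /sound_all []. Qed.
End Sound.


Arguments STEP : simpl never.
Arguments step : simpl never.

Lemma recfS b s n : recf b s n.+1 = s n (recf b s n). Proof. by []. Qed.

Fixpoint bnd (k : nat) (e : expr) : bool :=
  match e with
  | Var i => i < k
  | Cst _ => true
  | Succ e | Pred e | Fst e | Snd e | Orc e => bnd k e
  | Pair a b => bnd k a && bnd k b
  | Let a b => bnd k a && bnd k.+1 b
  | IfZ a b c => [&& bnd k a, bnd k b & bnd k c]
  | Rec a b c => [&& bnd k a, bnd k b & bnd k.+2 c]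
  | Ext _ _ e => bnd k e
  end.

Fixpoint noext (e : expr) : bool :=
  match e with
  | Var _ | Cst _ => true
  | Succ e | Pred e | Fst e | Snd e | Orc e => noext e
  | Pair a b | Let a b => noext a && noext b
  | IfZ a b c | Rec a b c => [&& noext a, noext b & noext c]
  | Ext _ _ _ => false
  end.

Lemma noext_ok o e : noext e -> ok o e.
Proof.
elim: e => //=; try (by move=> *; auto);
  try (by move=> a IHa b IHb /andP[/IHa ? /IHb ?]);
  by move=> a IHa b IHb c IHc /and3P[/IHa ? /IHb ? /IHc ?].
Qed.

Lemma den_bnd o e k env env' : bnd k e -> (forall i, i < k -> nth 0 env i = nth 0 env' i) ->
  den o e env = den o e env'.
Proof.
elim: e k env env'.
- by move=> i k env env' Hi H; apply: H.
- by [].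
- by move=> e IH k env env' Hb H; rewrite /= (IH k env env').
- by move=> e IH k env env' Hb H; rewrite /= (IH k env env').
- by move=> a IHa b IHb k env env' /andP[Ha Hb] H; rewrite /= (IHa k env env') // (IHb k env env').
- by move=> e IH k env env' Hb H; rewrite /= (IH k env env').
- by move=> e IH k env env' Hb H; rewrite /= (IH k env env').
- by move=> e IH k env env' Hb H; rewrite /= (IH k env env').
- move=> a IHa b IHb k env env' /andP[Ha Hb] H; rewrite /= (IHa k env env') //.
  apply: (IHb k.+1) => // -[|i] //= hi; exact: H.
- move=> a IHa b IHb c IHc k env env' /and3P[Ha Hb Hc] H.
  by rewrite /= (IHa k env env') // (IHb k env env') // (IHc k env env').
- move=> a IHa b IHb c IHc k env env' /and3P[Ha Hb Hc] H.
  rewrite !den_Rec (IHa k env env') //; elim: (den o a env') => [|n IH] /=; first exact: (IHb k).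
  rewrite IH; apply: (IHc k.+2) => // -[|[|i]] //= hi; exact: H.
- by move=> p F e IH k env env' Hb H; rewrite /= (IH k env env').
Qed.

Lemma bnd_STEP RES : bnd 3 RES -> bnd 1 (STEP RES).
Proof. by move=> H; rewrite /STEP /= H. Qed.
Lemma noext_STEP RES : noext RES -> noext (STEP RES).
Proof. by move=> H; rewrite /STEP /= H. Qed.


Lemma den_STEP o RES c rest : bnd 3 RES -> den o (STEP RES) (c :: rest) = step o RES c.
Proof.
move=> H; have := @den_bnd o (STEP RES) 1 (c :: rest) [:: c] (bnd_STEP H).
by rewrite /step; apply => -[|i].
Qed.

Definition mu_prog (body : expr) := PMu (PComp (comp body) (PPair PSnd PFst)).

Lemma ev_mu_prog o body env n : ok o body ->
  (forall m, m < n -> den o body (m :: env) != 0) -> den o body (n :: env) = 0 ->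
  ev o (mu_prog body) (enc_env env) n.
Proof.
move=> Hok Hlt H0; have Hc : forall m, ev o (PComp (comp body) (PPair PSnd PFst)) (cpair (enc_env env) m) (den o body (m :: env)).
  move=> m; apply: evComp; last exact: (comp_correct Hok (m :: env)).
  exact: (evPair (ev_sndP _ _ _) (ev_fstP _ _ _)).
apply: evMu; first by rewrite -H0; exact: Hc.
move=> m hm; exists (den o body (m :: env)).-1; rewrite prednK; first exact: Hc.
by rewrite lt0n; exact: Hlt.
Qed.

Definition ITER RES INIT := Rec (Var 0) INIT (STEP RES).
Definition HALT RES INIT :=
  Let (ITER RES INIT) (IfEq (Fst (Fst (Var 0))) (Cst 1) (IfZ (Snd (Var 0)) (Cst 0) (Cst 1)) (Cst 1)).
Definition RUN RES INIT :=
  PComp (comp (Let (ITER RES INIT) (Snd (Fst (Var 0))))) (PPair (mu_prog (HALT RES INIT)) PId).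

Lemma den_ITER o RES INIT t env init : bnd 3 RES -> den o INIT (t :: env) = init ->
  den o (ITER RES INIT) (t :: env) = iter t (step o RES) init.
Proof.
move=> Hb Hi; rewrite /ITER den_Rec Hi den_Var.
have aux : forall m, recf init (fun n r => den o (STEP RES) (r :: n :: t :: env)) m = iter m (step o RES) init.
  elim=> [|m IH]; first by [].
  by rewrite recfS (den_STEP _ _ _ Hb) IH iterS.
exact: aux.
Qed.

Lemma run_correct o RES INIT env init v :
  noext RES -> noext INIT -> bnd 3 RES -> (forall t, den o INIT (t :: env) = init) ->
  reach o RES init (cpair (mRet v) 0) ->
  ev o (RUN RES INIT) (enc_env env) v.
Proof.
move=> NR NI Hb Hi [n0 Hn0].
pose hb c := ((unpair (unpair c).1).1 == 1) && ((unpair c).2 == 0).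
have exP : exists t, hb (iter t (step o RES) init).
  by exists n0; rewrite Hn0 /hb /mRet !unpairK.
pose t := ex_minn exP.
have [Ht Hmin] : hb (iter t (step o RES) init) /\ forall m, hb (iter m (step o RES) init) -> t <= m.
  by rewrite /t; case: ex_minnP.
have Ei : forall m, den o (ITER RES INIT) (m :: env) = iter m (step o RES) init.
  by move=> m; apply: den_ITER.
set c := iter t (step o RES) init in Ht.
have Ec : c = cpair (mRet (unpair (unpair c).1).2) 0.
  move: Ht; rewrite /hb => /andP[/eqP H1 /eqP H2].
  by rewrite /mRet -H1 -H2 !cpairK.
have Hv : (unpair (unpair c).1).2 = v.
  have tle : t <= n0 by apply: Hmin; rewrite Hn0 /hb /mRet !unpairK.
  have : iter n0 (step o RES) init = c.
    rewrite -(subnK tle) iterD -/c; elim: (n0 - t) => //= k ->.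
    by rewrite {1}Ec step_halt -Ec.
  by rewrite Hn0 {1}Ec => /cpair_inj [/cpair_inj [_ ->]].
have Hhalt : forall m, den o (HALT RES INIT) (m :: env) = if hb (iter m (step o RES) init) then 0 else 1.
  move=> m; rewrite /HALT den_Let Ei den_IfEq den_IfZ /hb /=.
  case: eqP => //= _; by case: eqP => [->|]; [|case: (unpair _).2].
apply: evComp (evPair (@ev_mu_prog o (HALT RES INIT) env t _ _ _) (evId _ _)) _.
- by apply: noext_ok; rewrite /HALT /ITER /= NI NR.
- by move=> m hm; rewrite Hhalt; case: ifP => // /Hmin; lia.
- by rewrite Hhalt -/c Ht.
- have Hok : ok o (Let (ITER RES INIT) (Snd (Fst (Var 0)))) by apply: noext_ok; rewrite /ITER /= NI NR.
  have := comp_correct Hok (t :: env).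
  by rewrite den_Let Ei -/c den_Snd den_Fst den_Var /= Hv.
Qed.


Lemma den_EvalE o T C X env : den o (EvalE T C X) env = mEval (den o T env) (den o C env) (den o X env).
Proof. by []. Qed.
Lemma den_RetE o V env : den o (RetE V) env = mRet (den o V env).
Proof. by []. Qed.
Ltac drw1 := rewrite ?den_EvalE ?den_RetE ?den_IfEq ?den_Odd ?den_Half ?den_HalfOdd ?den_Sub ?den_Dbl ?den_IfZ ?den_Fst ?den_Snd
   ?den_Var ?den_Pair ?den_Cst ?den_Orc ?den_Pred ?den_Succ ?unpairK; cbn beta iota delta [fst snd predn nth].
Ltac drw := do 4 drw1.

Lemma prog_of_pickle p : prog_of (pickle p) = p.
Proof. by rewrite /prog_of pickleK. Qed.

Definition EvalE' := EvalE.

Section Fwd.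
Variables (X Y : nat -> bool) (f : nat -> nat -> nat).
Hypothesis emb : K1_K2_embedding X Y f.
Variables (c0 cS cA cs ca : nat).

Definition FT (j m : expr) := IfZ j (EvalE (Cst 0) (Cst c0) m) (EvalE (Pair (Cst 1) j) (Cst cs) m).
Definition RESf :=
  IfZ (Fst (Var 1)) (RetE (Orc (Var 0)))
    (IfZ (Odd (Var 0))
       (EvalE (Cst 0) (IfEq (Fst (Var 1)) (Cst 1) (Cst cS) (Cst cA)) (Half (Var 0)))
       (IfEq (Fst (Var 1)) (Cst 1) (FT (Pred (Snd (Var 1))) (Half (Var 0))) (FT (Snd (Var 1)) (Half (Var 0))))).

Definition ft j m := if j is 0 then mEval 0 c0 m else mEval (cpair 1 j) cs m.

Lemma den_FT o j m env : den o (FT j m) env = ft (den o j env) (den o m env).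
Proof. by rewrite /FT den_IfZ !den_EvalE den_Pair !den_Cst; case: (den o j env). Qed.

Lemma RESf_real o q c : den o RESf [:: q; 0; c] = mRet (o q).
Proof. by rewrite /RESf; drw. Qed.

Lemma RESf_even o k j q c : k != 0 -> ~~ odd q ->
  den o RESf [:: q; cpair k j; c] = mEval 0 (if k == 1 then cS else cA) q./2.
Proof. move=> Hk Hq; rewrite /RESf; drw; case: k Hk => // k _; by rewrite (negPf Hq). Qed.

Lemma RESf_odd1 o j q c : odd q ->
  den o RESf [:: q; cpair 1 j; c] = ft j.-1 q./2.
Proof. move=> Hq; rewrite /RESf; drw; rewrite Hq /=; by case: j.-1. Qed.

Lemma RESf_odd2 o j q c : odd q ->
  den o RESf [:: q; cpair 2 j; c] = ft j q./2.
Proof. move=> Hq; rewrite /RESf; drw; rewrite Hq /=; by case: j. Qed.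
End Fwd.

Lemma join_even g h q : ~~ odd q -> join g h q = g q./2.
Proof. by rewrite /join => /negPf ->. Qed.
Lemma join_odd g h q : odd q -> join g h q = h q./2.
Proof. by rewrite /join => ->. Qed.

Lemma fwd X Y f : K1_K2_embedding X Y f -> turing_le X Y.
Proof.
case=> Hel Hinj Happ.
have [k0 Hk0] : exists k0, f 0 k0 <> f 1 k0.
  apply: not_all_ex_not => H; by have := Hinj 0 1 H.
case: (Hel 0) => e0 H0; case: (Hel (pickle PSucc)) => eS HS; case: (Hel (pickle POracle)) => eA HA.
set sC := pickle PSucc in HS Happ *; set aC := pickle POracle in HA Happ *.
pose c0 := myc (prog_of e0); pose cS := myc (prog_of eS); pose cA := myc (prog_of eA).
pose cs := myc (prog_of (f sC 0)); pose ca := myc (prog_of (f aC 0)).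
pose RES := RESf c0 cS cA cs.
pose o := chi Y.
have T0 : forall p x v, ev o p x v -> forall K, reach o RES (cpair (mEval 0 (myc p) x) K) (cpair (mRet v) K).
  apply: sound => q K; apply: reach_step; rewrite step_oracle /RES RESf_real; exact: reach_refl.
have Lev : forall j m K, reach o RES (cpair (ft c0 cs j m) K) (cpair (mRet (f j m)) K).
  elim=> [|j IH] m K; first exact: (T0 _ _ _ (H0 m)).
  rewrite /ft; apply: (@sound o RES (cpair 1 j.+1) (join (f sC) (f j))).
    move=> q K'; apply: reach_step; rewrite step_oracle.
    case Hq: (odd q).
      rewrite /RES RESf_odd1 // join_odd //; exact: IH.
    rewrite /RES RESf_even ?Hq // join_even ?Hq //=; exact: (T0 _ _ _ (HS _)).
  have := Happ sC j j.+1; rewrite /K1app /Phi /sC prog_of_pickle => /(_ (evSucc _ _)).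
  by move=> /(_ m).
have Top : forall n, reach o RES (cpair (mEval (cpair 2 n) ca k0) 0) (cpair (mRet (f (chi X n) k0)) 0).
  move=> n; apply: (@sound o RES (cpair 2 n) (join (f aC) (f n))).
    move=> q K'; apply: reach_step; rewrite step_oracle.
    case Hq: (odd q).
      rewrite /RES RESf_odd2 // join_odd //; exact: Lev.
    rewrite /RES RESf_even ?Hq // join_even ?Hq //=; exact: (T0 _ _ _ (HA _)).
  have := Happ aC n (chi X n); rewrite /K1app /Phi /aC prog_of_pickle => /(_ (evOracle _ _)).
  by move=> /(_ k0).
pose INIT := Pair (EvalE (Pair (Cst 2) (Var 1)) (Cst ca) (Cst k0)) (Cst 0).
pose R := RUN RES INIT.
have HR : forall n, ev o R (enc_env [:: n]) (f (chi X n) k0).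
  move=> n; apply: (run_correct (init := cpair (mEval (cpair 2 n) ca k0) 0)) => //; exact: Top.
pose TEST := IfEq (Var 0) (Cst (f 1 k0)) (Cst 1) (Cst 0).
exists (pickle (PComp (comp TEST) (PPair (PComp R (PPair PId PZero)) PZero))) => n.
rewrite /Phi prog_of_pickle.
apply: evComp (evPair (evComp (evPair (evId _ _) (evZero _ _)) (HR n)) (evZero _ _)) _.
have := comp_correct (@noext_ok o TEST isT) [:: f (chi X n) k0].
rewrite den_IfEq den_Var den_Cst /=; congr ev; rewrite /chi; case: (X n); first by rewrite eqxx.
by case: eqP.
Qed.


Lemma recf_ext b s s' n : (forall k r, s k r = s' k r) -> recf b s n = recf b s' n.
Proof. by move=> H; elim: n => //= n ->. Qed.

Lemma recf_iter b (g : nat -> nat) n : recf b (fun _ r => g r) n = iter n g b.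
Proof. by elim: n => //= n ->. Qed.

Definition STEPV := IfZ (Fst (Var 0)) (Var 0)
   (IfZ (Odd (Fst (Var 0))) (Pair (Half (Fst (Var 0))) (Succ (Snd (Var 0)))) (Var 0)).
Definition stepv r := let: (c, b) := unpair r in
  if c == 0 then r else if odd c then r else cpair c./2 b.+1.
Lemma den_STEPV o r env : den o STEPV (r :: env) = stepv r.
Proof.
have [c [b ->]] : exists c b, r = cpair c b by exists (unpair r).1, (unpair r).2; rewrite cpairK.
rewrite /STEPV /stepv; drw; case: c => //= c; by case: (odd c).
Qed.

Definition VALS n := Rec n (Pair n (Cst 0)) STEPV.
Definition CHd n := Snd (VALS n).
Definition CTl n := Half (Fst (VALS n)).

Lemma den_VALS o n env : den o (VALS n) env = iter (den o n env) stepv (cpair (den o n env) 0).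
Proof.
rewrite /VALS den_Rec den_Pair den_Cst -recf_iter.
by apply: recf_ext => k r; rewrite den_STEPV.
Qed.

Lemma iter_stepv a b k o : odd o -> a <= k -> iter k stepv (cpair (2 ^ a * o) b) = cpair o (b + a).
Proof.
move=> Ho; elim: a b k => [|a IH] b k hk.
  rewrite mul1n addn0; elim: k {hk} => //= k ->.
  by rewrite /stepv unpairK; case: eqP => // _; rewrite Ho.
case: k hk => // k hk; rewrite iterSr /stepv unpairK.
have o0 : 0 < o by rewrite lt0n; apply/eqP => E; rewrite E in Ho.
have -> : (2 ^ a.+1 * o == 0) = false by rewrite muln_eq0 expn_eq0 /= eqn0Ngt o0.
rewrite expnS -mulnA mul2n odd_double doubleK IH ?addSnnS //.
Qed.

Definition chd n := (unpair (iter n stepv (cpair n 0))).2.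
Definition ctl n := ((unpair (iter n stepv (cpair n 0))).1)./2.
Lemma den_CHd o n env : den o (CHd n) env = chd (den o n env).
Proof. by rewrite /CHd den_Snd den_VALS. Qed.
Lemma den_CTl o n env : den o (CTl n) env = ctl (den o n env).
Proof. by rewrite /CTl den_Half den_Fst den_VALS. Qed.

Lemma chd_ctl v m : chd (2 ^ v * (2 * m).+1) = v /\ ctl (2 ^ v * (2 * m).+1) = m.
Proof.
have hv : v <= 2 ^ v * (2 * m).+1.
  apply: leq_trans (ltnW (ltn_expl v (isT : 1 < 2))) _; rewrite leq_pmulr //.
rewrite /chd /ctl iter_stepv ?unpairK //=; last by rewrite mul2n /= odd_double.
by split=> //; rewrite mul2n; exact: uphalf_double.
Qed.

Lemma decode_pos n : 0 < n -> CodeSeq.decode n = chd n :: CodeSeq.decode (ctl n) /\ ctl n < n.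
Proof.
move=> Hn; case E: (CodeSeq.decode n) => [|v s].
  by move: (CodeSeq.decodeK n); rewrite E /= => H; rewrite -H in Hn.
have En : n = 2 ^ v * (2 * CodeSeq.code s).+1.
  by rewrite -(CodeSeq.decodeK n) E /= -mul2n.
have [Hc Ht] := chd_ctl v (CodeSeq.code s); rewrite -En in Hc Ht; rewrite Hc Ht CodeSeq.codeK; split=> //.
rewrite {1}En; apply: leq_trans (_ : (2 * CodeSeq.code s).+1 <= _); first lia.
by rewrite leq_pmull // expn_gt0.
Qed.

Ltac dstep := first [ rewrite den_CHd | rewrite den_CTl | rewrite den_FT | rewrite den_EvalE
  | rewrite den_RetE | rewrite den_IfEq | rewrite den_Odd | rewrite den_Half | rewrite den_HalfOdd
  | rewrite den_Sub | rewrite den_Dbl | rewrite den_Hd | rewrite den_Tl | rewrite den_Cons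
  | rewrite den_Case | rewrite den_IfZ | rewrite den_Let | rewrite den_Fst | rewrite den_Snd
  | rewrite den_Var | rewrite den_Pair | rewrite den_Cst | rewrite den_Orc | rewrite den_Pred
  | rewrite den_Succ | rewrite unpairK | progress cbn beta iota delta [fst snd predn nth map] | progress cbv beta iota delta [nth] ].
Ltac drwX := repeat dstep.

Lemma unpickle_sumE n : @unpickle (nat + nat)%type n =
  if CodeSeq.decode n is [:: a; b] then sum_of_opair (ohead (CodeSeq.decode a), ohead (CodeSeq.decode b)) else None.
Proof.
rewrite /unpickle /= /pcomp /unpickle /= /unpickle /= /pcomp /unpickle_tagged /=.
case: (CodeSeq.decode n) => [|a [|b [|c s]]] //=. all: rewrite /unpickle /= /pcomp /=.
by case: (CodeSeq.decode a) => [|? ?]; case: (CodeSeq.decode b) => [|? ?].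
Qed.

Definition TOK (e : expr) :=
  IfZ e (Cst 0) (IfZ (CTl e) (Cst 0) (IfZ (CTl (CTl e))
    (IfZ (CHd (CTl e)) (IfZ (CHd e) (Cst 0) (Succ (Pair (Cst 0) (CHd (CHd e)))))
                       (Succ (Pair (Cst 1) (CHd (CHd (CTl e))))))
    (Cst 0))).

Definition tokc (x : option (nat + nat)) :=
  match x with None => 0 | Some (inl a) => (cpair 0 a).+1 | Some (inr b) => (cpair 1 b).+1 end.

Lemma ohead_decode x : ohead (CodeSeq.decode x) = if x is 0 then None else Some (chd x).
Proof. by case: x => // x; have [-> _] := decode_pos (isT : 0 < x.+1). Qed.

Lemma den_TOK o e env : den o (TOK e) env = tokc (@unpickle (nat + nat)%type (den o e env)).
Proof.
rewrite /TOK unpickle_sumE; drwX.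
case: (den o e env) => [|n] //; match goal with |- ?g => idtac g end; have [-> _] := decode_pos (isT : 0 < n.+1).
case: (ctl n.+1) => [|m] //; have [-> _] := decode_pos (isT : 0 < m.+1).
case: (ctl m.+1) => [|k]; last by have [-> _] := decode_pos (isT : 0 < k.+1).
rewrite !ohead_decode /=.
by case: (chd m.+1) => [|b]; case: (chd n.+1) => [|a].
Qed.


Definition ocode (x : option prog) := if x is Some p then (myc p).+1 else 0.
Definition octree (t : GenTree.tree nat) := ocode (prog_dec t).

Definition pdcs (n : nat) (xs : seq nat) : nat :=
  match xs with
  | [::] => if n <= 5 then (cpair n 0).+1 else 0
  | [:: a] => if (n == 9) && (a != 0) then (cpair 9 a.-1).+1 else 0
  | [:: a; b] => if [&& 6 <= n <= 8, a != 0 & b != 0] then (cpair n (cpair a.-1 b.-1)).+1 else 0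
  | _ => 0
  end.

Lemma octree_node n l : octree (GenTree.Node n l) = pdcs n (map octree l).
Proof.
rewrite /octree; case: l => [|t1 [|t2 [|t3 l]]].
- by do 6 (case: n => [|n]; first by []); case: n => [|[|[|[|n]]]].
- rewrite /=; case: (prog_dec t1) => [p|] /=;
  by do 9 (case: n => [|n]; first by []); case: n => [|n].
- rewrite /=; case: (prog_dec t1) => [p|]; case: (prog_dec t2) => [q|] /=;
  by do 6 (case: n => [|n]; first by []); do 3 (case: n => [|n]; first by []); case: n.
- by do 10 (case: n => [|n]; first by []).
Qed.

Definition PDC (nE LE : expr) : expr :=
  let leaf := IfZ LE (Succ (Pair nE (Cst 0))) (Cst 0) in
  let bin := IfZ LE (Cst 0) (IfZ (Tl LE) (Cst 0) (IfZ (Tl (Tl LE))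
               (IfZ (Hd LE) (Cst 0) (IfZ (Hd (Tl LE)) (Cst 0)
                  (Succ (Pair nE (Pair (Pred (Hd LE)) (Pred (Hd (Tl LE))))))))
               (Cst 0))) in
  let un := IfZ LE (Cst 0) (IfZ (Tl LE) (IfZ (Hd LE) (Cst 0) (Succ (Pair (Cst 9) (Pred (Hd LE))))) (Cst 0)) in
  Case nE [:: leaf; leaf; leaf; leaf; leaf; leaf; bin; bin; bin; un] (Cst 0).

Lemma den_PDC o nE LE env xs : den o LE env = enc_list xs ->
  den o (PDC nE LE) env = pdcs (den o nE env) xs.
Proof.
move=> HL; rewrite /PDC den_Case; move Hm: (den o nE env) => m.
case: m Hm => [|[|[|[|[|[|[|[|[|[|n]]]]]]]]]] Hm; cbv beta iota delta [nth map];
  try (drwX; rewrite ?Hm HL; case: xs HL => [|a [|b [|c s]]] HL /=; drwX; clear HL; (try case: a => [|a]); (try case: b => [|b]); by []).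
by case: xs {HL} => [|a [|b [|c s]]]; case: n {Hm}.
Qed.


Definition STEP1 := IfZ (Fst (Var 0)) (Var 0) (Pair (CTl (Fst (Var 0))) (Cons (CHd (Fst (Var 0))) (Snd (Var 0)))).
Definition g1 r := den (fun _ => 0) STEP1 [:: r].

Lemma den_STEP1_g o r env : den o STEP1 (r :: env) = g1 r.
Proof.
rewrite /g1 -[r]cpairK; case: (unpair r) => c a /=.
by rewrite /STEP1; drwX; case: c.
Qed.

Lemma g1_0 a : g1 (cpair 0 a) = cpair 0 a.
Proof. by rewrite /g1 /STEP1; drwX. Qed.
Lemma g1_S c L : 0 < c -> g1 (cpair c (enc_list L)) = cpair (ctl c) (enc_list (chd c :: L)).
Proof. by case: c => // c _; rewrite /g1 /STEP1; drwX. Qed.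

Lemma pass1_iter k c L : c <= k ->
  iter k g1 (cpair c (enc_list L)) = cpair 0 (enc_list (catrev (CodeSeq.decode c) L)).
Proof.
elim: k c L => [|k IH] c L hc.
  by have -> : c = 0 by lia.
rewrite iterSr; case: c hc => [|c] hc.
  by rewrite g1_0 -[0]/(0 : nat) (IH 0 L).
have [Hd Hlt] := decode_pos (isT : 0 < c.+1).
rewrite g1_S // IH; last lia.
by rewrite Hd.
Qed.

Definition PASS1 e := Snd (Rec e (Pair e (Cst 0)) STEP1).
Lemma den_PASS1 o e env : den o (PASS1 e) env = enc_list (rev (CodeSeq.decode (den o e env))).
Proof.
rewrite /PASS1 den_Snd den_Rec den_Pair den_Cst.
rewrite (@recf_ext _ _ (fun _ r => g1 r)); last by move=> k r; rewrite den_STEP1_g.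
by rewrite recf_iter -[0]/(enc_list [::]) pass1_iter // unpairK.
Qed.

Ltac dstep2 := first [ rewrite den_TOK | dstep ].
Ltac drwY := repeat dstep2.

Definition STEP2 :=
  let L1 := Fst (Var 1) in let S1 := Fst (Snd (Var 1)) in let S2 := Snd (Snd (Var 1)) in
  let T := Pred (Var 0) in
  IfZ (Fst (Var 0)) (Var 0) (Let (TOK (Hd (Fst (Var 0))))
   (IfZ (Var 0) (Pair (Tl L1) (Snd (Var 1)))
     (IfZ (Fst T)
        (IfZ (Snd T) (Pair (Tl L1) (Pair (Cst 0) (Cons S1 S2)))
                     (Pair (Tl L1) (Pair (Cons (PDC (Pred (Snd T)) S1) (Hd S2)) (Tl S2))))
        (Pair (Tl L1) (Pair (Cons (Cst 0) S1) S2))))).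

Definition encT (l : seq (GenTree.tree nat)) := enc_list (map octree l).
Definition rep (st : seq (GenTree.tree nat) * seq (seq (GenTree.tree nat))) :=
  cpair (encT st.1) (enc_list (map encT st.2)).
Definition g2 x st := if @unpickle (nat + nat)%type x is Some c then GenTree.decode_step c st else st.

Lemma den_STEP2_0 o S env : den o STEP2 (cpair 0 S :: env) = cpair 0 S.
Proof. by rewrite /STEP2; drwY. Qed.

Lemma den_STEP2_cons o x ns st env :
  den o STEP2 (cpair (enc_list (x :: ns)) (rep st) :: env) = cpair (enc_list ns) (rep (g2 x st)).
Proof.
rewrite /STEP2 /g2; case E: (@unpickle (nat + nat)%type x) => [[[|n]|y]|];
repeat (first [ rewrite E | (rewrite (@den_PDC o _ _ _ (map octree st.1)); last by rewrite /rep; drwY) | dstep2 ]).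
all: case: st => fs1 fs2; rewrite /= /rep /encT /=.
- by [].
- rewrite octree_node; case: fs2 => [|l fs2] /=; by rewrite ?unpair0 ?unpairK.
- by [].
- by [].
Qed.

Lemma bnd_STEP2 : bnd 1 STEP2. Proof. by []. Qed.
Definition G2 o r := den o STEP2 [:: r].

Lemma size_enc_list ns : size ns <= enc_list ns.
Proof. elim: ns => //= x ns IH; have := cpair_ge2 x (enc_list ns); lia. Qed.

Lemma pass2_iter o ns st k : size ns <= k ->
  iter k (G2 o) (cpair (enc_list ns) (rep st)) = cpair 0 (rep (foldl (fun st x => g2 x st) st ns)).
Proof.
elim: ns st k => [|x ns IH] st k /=.
  move=> _; elim: k => //= k ->; exact: den_STEP2_0.
case: k => // k hk; rewrite iterSr /G2 den_STEP2_cons; exact: IH.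
Qed.

Definition lc := myc loop_prog.
Definition FINAL := IfZ (Fst (Snd (Var 0))) (Cst lc)
   (IfZ (Hd (Fst (Snd (Var 0)))) (Cst lc) (Pred (Hd (Fst (Snd (Var 0)))))).
Definition CONV e := Let (PASS1 e) (Let (Rec (Var 0) (Pair (Var 0) (Pair (Cst 0) (Cst 0))) STEP2) FINAL).

Lemma foldr_g2 st l : foldr g2 st l = foldr (@GenTree.decode_step nat) st (pmap (@unpickle (nat + nat)%type) l).
Proof. by elim: l => //= x l ->; rewrite /g2; case: (unpickle x). Qed.

Lemma den_CONV o e env : den o (CONV e) env = myc (prog_of (den o e env)).
Proof.
rewrite /CONV den_Let den_PASS1 den_Let den_Rec !den_Pair !den_Var !den_Cst.
set L := enc_list _.
rewrite (@recf_ext _ _ (fun _ r => G2 o r)); last first.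
  move=> k r; rewrite /G2; apply: (den_bnd o bnd_STEP2) => -[|i] //.
rewrite recf_iter (_ : cpair 0 0 = rep ([::], [::])) // pass2_iter; last exact: size_enc_list.
rewrite foldl_rev foldr_g2 /prog_of.
have -> : @unpickle prog (den o e env) =
  obind prog_dec (GenTree.decode (pmap (@unpickle (nat + nat)%type) (CodeSeq.decode (den o e env)))) by [].
rewrite /GenTree.decode; case: (foldr _ _ _) => fs1 fs2.
rewrite /FINAL; drwX.
case: fs1 => [|t fs1] //=; rewrite unpairK /= /octree.
by case: (prog_dec t).
Qed.


Definition RESb := RetE (Orc (Dbl (Succ (Succ (Var 0))))).
Definition INITb := Pair (EvalE (Cst 0) (CONV (Orc (Cst 2))) (Orc (Cst 3))) (Cst 0).
Definition RUNP := RUN RESb INITb.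
Definition toenv := PPair PId PZero.
Definition OUTE := IfZ (Var 1) (Orc (Cst 0)) (IfZ (Pred (Var 1)) (Var 0) (Orc (Dbl (Var 1)))).
Definition Eprog := PComp (comp OUTE) (PPair (PComp RUNP toenv) toenv).
Definition fb (X : nat -> bool) (EC a n : nat) : nat :=
  match n with 0 => EC | 1 => a | n'.+2 => chi X n' end.

Lemma bwd X Y : turing_le X Y -> exists f, K1_K2_embedding X Y f.
Proof.
case=> e He.
have : prog_of (pickle Eprog) = Eprog by exact: prog_of_pickle.
move: (pickle Eprog) => EC HEC.
exists (fb X EC); split.
- move=> a; pose OUTF := IfZ (Var 0) (Cst EC) (IfZ (Pred (Var 0)) (Cst a) (Ext (prog_of e) (chi X) (Pred (Pred (Var 0))))).
  exists (pickle (PComp (comp OUTF) toenv)) => n; rewrite /Phi prog_of_pickle.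
  have Hok : ok (chi Y) OUTF by split=> //; exact: He.
  apply: evComp (evPair (evId _ _) (evZero _ _)) _.
  have := comp_correct Hok [:: n]; congr ev.
  rewrite /OUTF; drwX; by case: n => [|[|n]].
- by move=> a b /(_ 1).
- move=> a b c Hab n; rewrite /K2app /Phi /= HEC.
  set w := join (fb X EC a) (fb X EC b).
  have Hrun : ev w RUNP (enc_env [:: n]) c.
    apply: (run_correct (init := cpair (mEval 0 (myc (prog_of a)) b) 0)).
    + by [].
    + by [].
    + by [].
    + move=> t; rewrite /INITb den_Pair den_EvalE den_CONV !den_Orc !den_Cst.
      by rewrite /w /join /=.
    apply: (@sound w RESb 0 (chi X)); last exact: Hab.
    move=> q K; apply: reach_step; rewrite step_oracle /RESb; drwX.
    rewrite /w /join odd_double doubleK /=; exact: reach_refl.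
  apply: evComp (evPair (evComp (evPair (evId _ _) (evZero _ _)) Hrun) (evPair (evId _ _) (evZero _ _))) _.
  have := comp_correct (@noext_ok w OUTE isT) [:: c; n]; congr ev.
  rewrite /OUTE; drwX; case: n {Hrun} => [|[|n]] //=.
  by rewrite /w /join odd_double doubleK.
Qed.

Theorem theorem6p7 (X Y : nat -> bool) :
  (exists f : nat -> nat -> nat, K1_K2_embedding X Y f) <-> turing_le X Y.
Proof. split; [case=> f; exact: fwd | exact: bwd]. Qed.
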